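(* Let $n>m\geq 2$ and let $\mathbf{p}=(p_1,\ldots,p_n)$ be a probability vector with $p_1\geq\cdots\geq p_n\geq 0$. Let $\overline{\mathbf{q}}$ be the probability vector obtained from $\mathbf{p}$ by performing exactly $n-m$ Huffman merging steps, with ties broken arbitrarily. Then $$\mathtt{D}(\mathbf{p},\overline{\mathbf{q}})\leq\min_{\mathbf{q}}\mathtt{D}(\mathbf{p},\mathbf{q})+\alpha,\qquad \alpha=1-\frac{1+\ln(\ln 2)}{\ln 2}<0.08608,$$ where the minimum ranges over all probability vectors $\mathbf{q}=(q_1,\ldots,q_m)$ with $m$ components.
   Context: $H$ is Shannon entropy in bits. For probability vectors $\mathbf{p}$ (of length $n$) and $\mathbf{q}$ (of length $m$), $W(\mathbf{p},\mathbf{q})$ denotes the minimum entropy of a bivariate probability distribution (an $m\times n$ nonnegative matrix) whose marginals are $\mathbf{p}$ and $\mathbf{q}$. Then $$\mathtt{D}(\mathbf{p},\mathbf{q})=2W(\mathbf{p},\mathbf{q})-H(\mathbf{p})-H(\mathbf{q}),$$ which equals $\min\{H(X\mid Y)+H(Y\mid X)\}$ over all joint distributions of $(X,Y)$ with $X\sim\mathbf{p}$ and $Y\sim\mathbf{q}$. A Huffman merging step applied to a probability vector removes two smallest entries $x,y$, inserts the entry $x+y$, and re-sorts the vector in nonincreasing order. *)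

(* Defs.v *)
From Stdlib Require Import Reals Lra List Permutation Sorted ClassicalEpsilon.
Import ListNotations.
Open Scope R_scope.

Definition sumR (k : nat) (f : nat -> R) : R :=
  fold_right Rplus 0 (map f (seq 0 k)).

Definition log2 (x : R) : R := ln x / ln 2.

Definition entr (x : R) : R :=
  if Rle_dec x 0 then 0 else - (x * log2 x).

Definition is_prob (p : list R) : Prop :=
  Forall (fun x => 0 <= x) p /\ sumR (length p) (fun i => nth i p 0) = 1.

Definition H (p : list R) : R := sumR (length p) (fun i => entr (nth i p 0)).

(* A bivariate distribution with marginals p (length n) and q (length m):
   an m x n nonnegative matrix M (rows i < m, columns j < n). *)
Definition is_coupling (p q : list R) (M : nat -> nat -> R) : Prop :=
  (forall i j, (i < length q)%nat -> (j < length p)%nat -> 0 <= M i j) /\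
  (forall j, (j < length p)%nat -> sumR (length q) (fun i => M i j) = nth j p 0) /\
  (forall i, (i < length q)%nat -> sumR (length p) (fun j => M i j) = nth i q 0).

Definition Hjoint (m n : nat) (M : nat -> nat -> R) : R :=
  sumR m (fun i => sumR n (fun j => entr (M i j))).

Definition coupling_entropies (p q : list R) (h : R) : Prop :=
  exists M, is_coupling p q M /\ h = Hjoint (length q) (length p) M.

Definition is_inf (S : R -> Prop) (w : R) : Prop :=
  (forall h, S h -> w <= h) /\ (forall b, (forall h, S h -> b <= h) -> b <= w).

(* W(p,q): minimum (= infimum, it is attained) entropy of a coupling *)
Definition W (p q : list R) : R :=
  epsilon (inhabits 0) (is_inf (coupling_entropies p q)).

Definition D (p q : list R) : R := 2 * W p q - H p - H q.

Definition remove_two (i j : nat) (l : list R) : list R :=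
  map fst (filter (fun xk => negb (Nat.eqb (snd xk) i || Nat.eqb (snd xk) j))
                  (combine l (seq 0 (length l)))).

Definition huffman_step (p p' : list R) : Prop :=
  exists i j, i <> j /\ (i < length p)%nat /\ (j < length p)%nat /\
    (forall k, (k < length p)%nat -> k <> i -> k <> j ->
        nth i p 0 <= nth k p 0 /\ nth j p 0 <= nth k p 0) /\
    Permutation p' ((nth i p 0 + nth j p 0) :: remove_two i j p) /\
    Sorted Rge p'.

Inductive huffman_steps : nat -> list R -> list R -> Prop :=
  | hs0 : forall p, huffman_steps 0 p p
  | hsS : forall k p p' p'', huffman_step p p' -> huffman_steps k p' p'' ->
          huffman_steps (S k) p p''.

Definition alpha : R := 1 - (1 + ln (ln 2)) / ln 2.

(* Main.v *)
Require Import Defs.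
From Stdlib Require Import Reals Lra Lia List Permutation Sorted ClassicalEpsilon Arith.
Import ListNotations.
Open Scope R_scope.

Lemma sumR_0 f : sumR 0 f = 0.
Proof. reflexivity. Qed.

Lemma sumR_S k f : sumR (S k) f = sumR k f + f k.
Proof.
  unfold sumR. rewrite seq_S, map_app, fold_right_app. simpl.
  generalize (map f (seq 0 k)). intros l. induction l; simpl; lra.
Qed.

Lemma sumR_ext k f g : (forall i, (i < k)%nat -> f i = g i) -> sumR k f = sumR k g.
Proof.
  induction k; intros Hfg; [reflexivity|].
  rewrite !sumR_S, IHk by (intros; apply Hfg; lia). rewrite Hfg by lia. reflexivity.
Qed.

Lemma sumR_plus k f g : sumR k (fun i => f i + g i) = sumR k f + sumR k g.
Proof. induction k; [simpl; unfold sumR; simpl; lra|]. rewrite !sumR_S, IHk; lra. Qed.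

Lemma sumR_scal k c f : sumR k (fun i => c * f i) = c * sumR k f.
Proof. induction k; [unfold sumR; simpl; lra|]. rewrite !sumR_S, IHk; lra. Qed.

Lemma sumR_le k f g : (forall i, (i < k)%nat -> f i <= g i) -> sumR k f <= sumR k g.
Proof.
  induction k; intros H; [unfold sumR; simpl; lra|].
  rewrite !sumR_S. assert (sumR k f <= sumR k g) by (apply IHk; intros; apply H; lia).
  specialize (H k ltac:(lia)). lra.
Qed.

Lemma sumR_zero k : sumR k (fun _ => 0) = 0.
Proof. induction k; [reflexivity|]. rewrite sumR_S, IHk; lra. Qed.

Lemma sumR_shift k f : sumR (S k) f = f 0%nat + sumR k (fun i => f (S i)).
Proof.
  induction k; [unfold sumR; simpl; lra|].
  rewrite sumR_S, IHk, sumR_S. lra.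
Qed.

Lemma sumR_swap m n (F : nat -> nat -> R) :
  sumR m (fun i => sumR n (fun j => F i j)) = sumR n (fun j => sumR m (fun i => F i j)).
Proof.
  induction m.
  - rewrite sumR_0. symmetry. apply sumR_zero.
  - rewrite sumR_S, IHm. rewrite <- sumR_plus. apply sumR_ext. intros. rewrite sumR_S. reflexivity.
Qed.

Lemma sumR_ind k a c : (a < k)%nat -> sumR k (fun l => if Nat.eqb l a then c else 0) = c.
Proof.
  induction k; intros H; [lia|]. rewrite sumR_S.
  destruct (Nat.eqb k a) eqn:E.
  - apply Nat.eqb_eq in E. subst. rewrite (sumR_ext _ _ (fun _ => 0)). rewrite sumR_zero; lra.
    intros i Hi. destruct (Nat.eqb i a) eqn:E2; [apply Nat.eqb_eq in E2; lia|reflexivity].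
  - apply Nat.eqb_neq in E. rewrite IHk by lia. lra.
Qed.

Definition lsum (l : list R) : R := fold_right Rplus 0 l.

Lemma lsum_app a b : lsum (a ++ b) = lsum a + lsum b.
Proof. induction a; simpl; [lra|]. rewrite IHa; lra. Qed.

Lemma sumR_nth (g : R -> R) l : sumR (length l) (fun i => g (nth i l 0)) = lsum (map g l).
Proof.
  induction l; [reflexivity|]. simpl length. rewrite sumR_shift. simpl. rewrite IHl. reflexivity.
Qed.

Lemma lsum_perm l l' : Permutation l l' -> lsum l = lsum l'.
Proof. induction 1; simpl; try lra. Qed.

Lemma lsum_map_if (P : R -> bool) g l :
  lsum (map (fun x => if P x then g x else 0) l) = lsum (map g (filter P l)).
Proof. induction l; simpl; [reflexivity|]. destruct (P a); simpl; rewrite IHl; lra. Qed.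

Lemma lsum_filter_split (P : R -> bool) g l :
  lsum (map g l) = lsum (map g (filter P l)) + lsum (map g (filter (fun x => negb (P x)) l)).
Proof. induction l; simpl; [lra|]. destruct (P a); simpl; rewrite IHl; lra. Qed.

Lemma lsum_map_plus (f g : R -> R) l : lsum (map (fun x => f x + g x) l) = lsum (map f l) + lsum (map g l).
Proof. induction l; simpl; [lra|]. rewrite IHl; lra. Qed.

Lemma lsum_map_scal c (f : R -> R) l : lsum (map (fun x => c * f x) l) = c * lsum (map f l).
Proof. induction l; simpl; [lra|]. rewrite IHl; lra. Qed.

Lemma lsum_map_id l : lsum (map (fun x => x) l) = lsum l.
Proof. induction l; simpl; [lra|]. rewrite IHl; lra. Qed.

Lemma lsum_const c (l : list R) : lsum (map (fun _ => c) l) = c * INR (length l).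
Proof. induction l; [simpl; lra|]. cbn [map lsum fold_right length]. unfold lsum in IHl. rewrite IHl. rewrite S_INR. lra. Qed.

Lemma lsum_le (f g : R -> R) l : (forall x, In x l -> f x <= g x) -> lsum (map f l) <= lsum (map g l).
Proof. induction l; simpl; intros H; [lra|]. 
  assert (f a <= g a) by auto. assert (lsum (map f l) <= lsum (map g l)) by auto. lra. Qed.

Lemma lsum_nonneg l : (forall x, In x l -> 0 <= x) -> 0 <= lsum l.
Proof. induction l; simpl; intros H; [lra|].
  assert (0 <= a) by auto. assert (0 <= lsum l) by auto. lra. Qed.

Lemma Permutation_filter' {A} (P : A -> bool) l l' : Permutation l l' -> Permutation (filter P l) (filter P l').
Proof.
  induction 1; simpl; auto.
  - destruct (P x); auto.
  - destruct (P x), (P y); auto. apply perm_swap.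
  - eapply perm_trans; eauto.
Qed.
Lemma ln2_pos : 0 < ln 2.
Proof. rewrite <- ln_1. apply ln_increasing; lra. Qed.

Lemma ln_le_sub1 x : 0 < x -> ln x <= x - 1.
Proof. intros Hx. pose proof (exp_ineq1_le (ln x)). rewrite exp_ln in H by lra. lra. Qed.

Lemma ln_le_mono x y : 0 < x -> x <= y -> ln x <= ln y.
Proof. intros Hx Hxy. destruct (Req_dec x y); [subst; lra|]. left; apply ln_increasing; lra. Qed.

Lemma entr_nonneg_form x : 0 <= x -> entr x = - (x * log2 x).
Proof. intros Hx. unfold entr. destruct (Rle_dec x 0); [assert (x = 0) by lra; subst; lra|reflexivity]. Qed.

Lemma entr_0 : entr 0 = 0.
Proof. unfold entr. destruct (Rle_dec 0 0); lra. Qed.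

Lemma T1 M P : 0 <= M -> M <= P -> - (M * log2 P) <= entr M.
Proof.
  intros H0 H1. rewrite entr_nonneg_form by lra. destruct (Req_dec M 0); [subst; lra|].
  unfold log2. pose proof ln2_pos. assert (ln M <= ln P) by (apply ln_le_mono; lra).
  assert (M * ln M <= M * ln P) by (apply Rmult_le_compat_l; lra).
  unfold Rdiv. rewrite <- !Rmult_assoc. apply Ropp_le_contravar.
  apply Rmult_le_compat_r; [left; apply Rinv_0_lt_compat; lra|lra].
Qed.

Lemma T2 M q p z w : 0 <= M -> M <= q -> M <= p -> (0 < p -> 0 < z) -> 0 <= w -> M * z <= p * w ->
  (M - M * w / q) / ln 2 <= entr M + M * log2 q + M * log2 p - M * log2 z.
Proof.
  intros H0 Hq Hp Hz Hw Hmz. pose proof ln2_pos.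
  rewrite entr_nonneg_form by lra. destruct (Req_dec M 0).
  { subst. unfold Rdiv. rewrite !Rmult_0_l. lra. }
  assert (0 < z) by (apply Hz; lra).
  assert (0 < w). { assert (0 < M * z) by (apply Rmult_lt_0_compat; lra).
    destruct (Req_dec w 0); [subst; lra|lra]. }
  assert (0 < q) by lra. assert (0 < p) by lra.
  assert (K1 : 0 <= ln (p * w / (M * z))).
  { rewrite <- ln_1. apply ln_le_mono; [lra|]. apply (Rmult_le_reg_r (M*z)).
    apply Rmult_lt_0_compat; lra. unfold Rdiv. rewrite Rmult_assoc, Rinv_l, Rmult_1_l, Rmult_1_r; [lra|].
    apply Rgt_not_eq, Rmult_lt_0_compat; lra. }
  assert (K2 : 1 - w / q <= ln (q / w)).
  { pose proof (ln_le_sub1 (w / q) ltac:(apply Rdiv_lt_0_compat; lra)) as Hl.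
    rewrite <- (Rinv_div q w), ln_Rinv in Hl by (apply Rdiv_lt_0_compat; lra). rewrite Rinv_div in Hl. lra. }
  assert (E1 : ln (p * w / (M * z)) = ln p + ln w - ln M - ln z).
  { unfold Rdiv. rewrite ln_mult, ln_mult, ln_Rinv, ln_mult; try lra; try apply Rmult_lt_0_compat; try lra.
    apply Rinv_0_lt_compat, Rmult_lt_0_compat; lra. }
  assert (E2 : ln (q / w) = ln q - ln w).
  { unfold Rdiv. rewrite ln_mult, ln_Rinv; try lra. apply Rinv_0_lt_compat; lra. }
  assert (M * (1 - w/q) <= M * (ln q + ln p - ln M - ln z)).
  { apply Rmult_le_compat_l; lra. }
  unfold log2. unfold Rdiv in *. 
  replace (- (M * (ln M * / ln 2)) + M * (ln q * / ln 2) + M * (ln p * / ln 2) - M * (ln z * / ln 2))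
    with ((M * (ln q + ln p - ln M - ln z)) * / ln 2) by ring.
  replace ((M - M * w * / q) * / ln 2) with ((M * (1 - w * / q)) * / ln 2) by ring.
  apply Rmult_le_compat_r; [left; apply Rinv_0_lt_compat; lra|lra].
Qed.
Lemma sumR_nonneg k f : (forall i, (i < k)%nat -> 0 <= f i) -> 0 <= sumR k f.
Proof. intros H. rewrite <- (sumR_zero k). apply sumR_le. auto. Qed.

Lemma sumR_ge_term k f a : (forall i, (i < k)%nat -> 0 <= f i) -> (a < k)%nat -> f a <= sumR k f.
Proof.
  induction k; intros H Ha; [lia|]. rewrite sumR_S.
  destruct (Nat.eq_dec a k).
  - subst. assert (0 <= sumR k f) by (apply sumR_nonneg; intros; apply H; lia). lra.
  - assert (f a <= sumR k f) by (apply IHk; [intros; apply H; lia|lia]).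
    assert (0 <= f k) by (apply H; lia). lra.
Qed.

Lemma sumR_minus k f g : sumR k (fun i => f i - g i) = sumR k f - sumR k g.
Proof. induction k; [unfold sumR; simpl; lra|]. rewrite !sumR_S, IHk; lra. Qed.

Section Coup.
Variables (p q : list R) (M : nat -> nat -> R).
Hypothesis HC : is_coupling p q M.

Lemma coup_le_p i j : (i < length q)%nat -> (j < length p)%nat -> M i j <= nth j p 0.
Proof.
  intros Hi Hj. destruct HC as [H0 [H1 H2]]. rewrite <- H1 by auto.
  apply (sumR_ge_term _ (fun i => M i j)); auto.
Qed.

Lemma coup_le_q i j : (i < length q)%nat -> (j < length p)%nat -> M i j <= nth i q 0.
Proof.
  intros Hi Hj. destruct HC as [H0 [H1 H2]]. rewrite <- H2 by auto.
  apply (sumR_ge_term _ (fun j => M i j)); auto.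
Qed.

Lemma coup_nonneg i j : (i < length q)%nat -> (j < length p)%nat -> 0 <= M i j.
Proof. destruct HC as [H0 _]. auto. Qed.

Lemma coup_p_double (g : nat -> R) :
  sumR (length p) (fun j => - (nth j p 0 * g j)) =
  sumR (length q) (fun i => sumR (length p) (fun j => - (M i j * g j))).
Proof.
  rewrite sumR_swap. apply sumR_ext. intros j Hj. destruct HC as [H0 [H1 H2]].
  rewrite <- H1 by auto.
  rewrite (sumR_ext _ (fun i => - (M i j * g j)) (fun i => (- g j) * M i j)) by (intros; ring).
  rewrite sumR_scal. ring.
Qed.

Lemma Hp_double : H p = sumR (length q) (fun i => sumR (length p) (fun j => - (M i j * log2 (nth j p 0)))).
Proof.
  rewrite <- coup_p_double. unfold H. apply sumR_ext. intros j Hj.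
  apply entr_nonneg_form. destruct HC as [H0 [H1 H2]]. rewrite <- H1 by auto.
  apply sumR_nonneg. intros. auto.
Qed.

Lemma Hq_double : H q = sumR (length q) (fun i => sumR (length p) (fun j => - (M i j * log2 (nth i q 0)))).
Proof.
  unfold H. apply sumR_ext. intros i Hi. destruct HC as [H0 [H1 H2]].
  rewrite entr_nonneg_form by (rewrite <- H2 by auto; apply sumR_nonneg; auto).
  rewrite (sumR_ext _ (fun j => - (M i j * log2 (nth i q 0))) (fun j => (- log2 (nth i q 0)) * M i j)) by (intros; ring).
  rewrite sumR_scal, H2 by auto. ring.
Qed.

Lemma coup_lb1 : H p <= Hjoint (length q) (length p) M.
Proof.
  rewrite Hp_double. unfold Hjoint. apply sumR_le; intros i Hi. apply sumR_le; intros j Hj.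
  apply T1; [apply coup_nonneg|apply coup_le_p]; auto.
Qed.

Lemma coup_lb2 (z w : nat -> R) :
  is_prob q ->
  (forall j, (j < length p)%nat -> 0 < nth j p 0 -> 0 < z j) ->
  (forall i, (i < length q)%nat -> 0 <= w i) ->
  sumR (length q) w <= 1 ->
  (forall i j, (i < length q)%nat -> (j < length p)%nat -> M i j * z j <= nth j p 0 * w i) ->
  H p - sumR (length p) (fun j => - (nth j p 0 * log2 (z j))) <= Hjoint (length q) (length p) M - H q.
Proof.
  intros Hq Hz Hw Hsw Hmz.
  rewrite Hp_double, Hq_double, coup_p_double. unfold Hjoint.
  set (m := length q) in *. set (n := length p) in *.
  assert (E : sumR m (fun i => sumR n (fun j => M i j)) = 1).
  { destruct Hq as [_ Hq]. rewrite <- Hq. apply sumR_ext. intros. destruct HC as [_ [_ H2]]. auto. }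
  assert (L : sumR m (fun i => sumR n (fun j => (M i j - M i j * w i / nth i q 0) / ln 2)) <=
              sumR m (fun i => sumR n (fun j => entr (M i j) + M i j * log2 (nth i q 0) + M i j * log2 (nth j p 0) - M i j * log2 (z j)))).
  { apply sumR_le; intros i Hi; apply sumR_le; intros j Hj.
    apply T2; try apply coup_nonneg; try apply coup_le_q; try apply coup_le_p; auto. }
  assert (L2 : 0 <= sumR m (fun i => sumR n (fun j => (M i j - M i j * w i / nth i q 0) / ln 2))).
  { assert (X : forall i, (i < m)%nat -> sumR n (fun j => (M i j - M i j * w i / nth i q 0) / ln 2)
          = (nth i q 0 - nth i q 0 * w i / nth i q 0) / ln 2).
    { intros i Hi. destruct HC as [_ [_ H2]].
      rewrite (sumR_ext _ (fun j => (M i j - M i j * w i / nth i q 0) / ln 2) (fun j => ((1 - w i / nth i q 0) / ln 2) * M i j)) by (intros; unfold Rdiv; ring).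
      rewrite sumR_scal, H2 by auto. unfold Rdiv; ring. }
    rewrite (sumR_ext _ _ _ X).
    assert (Y : forall i, (i < m)%nat -> (nth i q 0 - w i) / ln 2 <= (nth i q 0 - nth i q 0 * w i / nth i q 0) / ln 2).
    { intros i Hi. pose proof ln2_pos. unfold Rdiv. apply Rmult_le_compat_r; [left; apply Rinv_0_lt_compat; lra|].
      destruct (Req_dec (nth i q 0) 0) as [E0|E0].
      - rewrite E0. specialize (Hw i Hi). lra.
      - field_simplify; lra. }
    eapply Rle_trans; [|apply sumR_le; exact Y].
    rewrite (sumR_ext _ (fun i => (nth i q 0 - w i) / ln 2) (fun i => / ln 2 * (nth i q 0 - w i))) by (intros; unfold Rdiv; ring).
    rewrite sumR_scal, sumR_minus.
    assert (sumR m (fun i => nth i q 0) = 1) by (destruct Hq; auto).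
    pose proof ln2_pos. apply Rmult_le_pos; [left; apply Rinv_0_lt_compat; lra|lra]. }
  assert (S : sumR m (fun i => sumR n (fun j => entr (M i j) + M i j * log2 (nth i q 0) + M i j * log2 (nth j p 0) - M i j * log2 (z j)))
     = sumR m (fun i => sumR n (fun j => entr (M i j))) - sumR m (fun i => sumR n (fun j => - (M i j * log2 (nth i q 0))))
       - (sumR m (fun i => sumR n (fun j => - (M i j * log2 (nth j p 0)))) - sumR m (fun i => sumR n (fun j => - (M i j * log2 (z j)))))).
  { rewrite <- !sumR_minus. apply sumR_ext; intros. rewrite <- !sumR_minus. apply sumR_ext; intros. ring. }
  lra.
Qed.
End Coup.
Lemma ln_div x y : 0 < x -> 0 < y -> ln (x / y) = ln x - ln y.
Proof. intros. unfold Rdiv. rewrite ln_mult, ln_Rinv; try lra. apply Rinv_0_lt_compat; lra. Qed.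

Lemma tangent x a : 0 < x -> 0 < a -> a * ln a + (1 + ln a) * (x - a) <= x * ln x.
Proof.
  intros Hx Ha. pose proof (ln_le_sub1 (a / x) ltac:(apply Rdiv_lt_0_compat; lra)) as Hl.
  rewrite ln_div in Hl by lra.
  assert (x * (ln a - ln x) <= x * (a / x - 1)) by (apply Rmult_le_compat_l; lra).
  replace (x * (a / x - 1)) with (a - x) in H by (field; lra). nra.
Qed.

Lemma chord v mu : 0 < mu -> mu <= v -> v <= 2 * mu -> v * ln v <= v * ln mu + 2 * (v - mu) * ln 2.
Proof.
  intros Hm H1 H2.
  pose proof (tangent mu v ltac:(lra) ltac:(lra)) as A.
  pose proof (tangent (2 * mu) v ltac:(lra) ltac:(lra)) as B.
  rewrite ln_mult in B by lra.
  assert (A' : (2 * mu - v) * (v * ln v + (1 + ln v) * (mu - v)) <= (2 * mu - v) * (mu * ln mu))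
    by (apply Rmult_le_compat_l; lra).
  assert (B' : (v - mu) * (v * ln v + (1 + ln v) * (2 * mu - v)) <= (v - mu) * (2 * mu * (ln 2 + ln mu)))
    by (apply Rmult_le_compat_l; lra).
  assert (mu * (v * ln v) <= mu * (v * ln mu + 2 * (v - mu) * ln 2)) by nra.
  apply Rmult_le_reg_l in H; lra.
Qed.

Definition cst : R := ln 2 - 1 - ln (ln 2).

Lemma alpha_eq : alpha = cst / ln 2.
Proof. unfold alpha, cst. pose proof ln2_pos. field. lra. Qed.

Lemma cst_nonneg : 0 <= cst.
Proof. unfold cst. pose proof (ln_le_sub1 (ln 2) ln2_pos). lra. Qed.

Lemma ratio_nat s mu (N : R) : 0 < mu -> 1 <= N -> N * mu <= s -> s <= 1 ->
  s * ln mu + 2 * (s - N * mu) * ln 2 <= s * ln (s / N) + cst.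
Proof.
  intros Hm HN Hs Hs1. assert (0 < s) by nra. set (u := N * mu / s).
  assert (Hu : 0 < u) by (unfold u; apply Rdiv_lt_0_compat; nra).
  assert (Emu : mu = (s / N) * u) by (unfold u; field; split; lra).
  assert (Hln : ln mu = ln (s / N) + ln u).
  { rewrite Emu, ln_mult; auto. apply Rdiv_lt_0_compat; lra. }
  pose proof ln2_pos.
  assert (K : ln u <= 2 * u * ln 2 - 1 - ln 2 - ln (ln 2)).
  { pose proof (ln_le_sub1 (u * 2 * ln 2) ltac:(apply Rmult_lt_0_compat; lra)) as Z.
    rewrite (ln_mult (u * 2) (ln 2)) in Z by (try apply Rmult_lt_0_compat; lra).
    rewrite (ln_mult u 2) in Z by lra. lra. }
  assert (Nmu : N * mu = u * s) by (unfold u; field; lra).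
  assert (s * ln u <= s * (2 * u * ln 2 - 1 - ln 2 - ln (ln 2))) by (apply Rmult_le_compat_l; lra).
  rewrite Hln. pose proof cst_nonneg. unfold cst in *.
  assert (s * (ln 2 - 1 - ln (ln 2)) <= ln 2 - 1 - ln (ln 2)).
  { rewrite <- (Rmult_1_l (ln 2 - 1 - ln (ln 2))) at 2. apply Rmult_le_compat_r; lra. }
  rewrite Nmu. nra.
Qed.

Lemma lsum_length_le l mu : (forall v, In v l -> mu <= v) -> INR (length l) * mu <= lsum l.
Proof.
  induction l; intros H; [simpl; lra|]. cbn [length]. rewrite S_INR.
  assert (mu <= a) by (apply H; left; auto). assert (INR (length l) * mu <= lsum l) by (apply IHl; intros; apply H; right; auto).
  unfold lsum in *. simpl. lra.
Qed.

Lemma lsum_zero_list (g : R -> R) L : g 0 = 0 -> (forall v, In v L -> v = 0) -> lsum (map g L) = 0.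
Proof.
  intros Hg. induction L; intros Z; [reflexivity|]. simpl. rewrite (Z a) by (left; auto).
  unfold lsum in *. rewrite IHL by (intros; apply Z; right; auto). lra.
Qed.

Lemma ratio_lemma (L : list R) mu :
  0 <= mu -> (forall v, In v L -> mu <= v <= 2 * mu) -> (1 <= length L)%nat -> lsum L <= 1 ->
  - (lsum L * log2 (lsum L / INR (length L))) - alpha <= lsum (map entr L).
Proof.
  intros Hm HL HN Hs1. pose proof ln2_pos. rewrite alpha_eq.
  destruct (Req_dec mu 0) as [E|E].
  - subst. assert (Z : forall v, In v L -> v = 0) by (intros v Hv; specialize (HL v Hv); lra).
    assert (lsum L = 0). { rewrite <- lsum_map_id. apply lsum_zero_list; auto. }
    assert (lsum (map entr L) = 0). { apply lsum_zero_list; auto. apply entr_0. }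
    rewrite H0, H1. pose proof cst_nonneg. assert (0 <= cst / ln 2) by (unfold Rdiv; apply Rmult_le_pos; [lra|left; apply Rinv_0_lt_compat; lra]). lra.
  - assert (Hmu : 0 < mu) by lra.
    assert (C : forall v, In v L -> - (v * ln mu + 2 * (v - mu) * ln 2) / ln 2 <= entr v).
    { intros v Hv. specialize (HL v Hv). rewrite entr_nonneg_form by lra. unfold log2.
      pose proof (chord v mu Hmu ltac:(lra) ltac:(lra)). unfold Rdiv.
      replace (- (v * (ln v * / ln 2))) with (- (v * ln v) * / ln 2) by ring.
      apply Rmult_le_compat_r; [left; apply Rinv_0_lt_compat; lra|lra]. }
    eapply Rle_trans; [|apply lsum_le; exact C].
    rewrite (map_ext _ (fun v => (-/ln 2) * ((ln mu + 2 * ln 2) * v - 2 * mu * ln 2))) by (intros; unfold Rdiv; ring).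
    rewrite lsum_map_scal.
    assert (EE : lsum (map (fun v => (ln mu + 2 * ln 2) * v - 2 * mu * ln 2) L)
                = (ln mu + 2 * ln 2) * lsum L - 2 * mu * ln 2 * INR (length L)).
    { rewrite (map_ext _ (fun v => (ln mu + 2 * ln 2) * v + (-(2 * mu * ln 2)))) by (intros; ring).
      rewrite lsum_map_plus, lsum_map_scal, lsum_map_id, lsum_const. ring. }
    rewrite EE.
    assert (HN' : 1 <= INR (length L)) by (apply (le_INR 1); auto).
    pose proof (lsum_length_le L mu ltac:(intros v Hv; apply HL; auto)).
    pose proof (ratio_nat (lsum L) mu (INR (length L)) Hmu HN' H0 Hs1).
    unfold log2. unfold Rdiv at 1 3. 
    assert (((ln mu + 2 * ln 2) * lsum L - 2 * mu * ln 2 * INR (length L)) * / ln 2 <=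
            (lsum L * ln (lsum L / INR (length L)) + cst) * / ln 2).
    { apply Rmult_le_compat_r; [left; apply Rinv_0_lt_compat; lra|nra]. }
    unfold Rdiv in H2 |- *. nra.
Qed.
Lemma map_fst_filter_combine (P : nat -> bool) (l : list R) s :
  map fst (filter (fun xk => P (snd xk)) (combine l (seq s (length l)))) =
  map (fun k => nth (k - s) l 0) (filter P (seq s (length l))).
Proof.
  revert s. induction l as [|a l IH]; intros s; [reflexivity|].
  simpl. destruct (P s) eqn:E; simpl; rewrite IH.
  - rewrite Nat.sub_diag. f_equal. apply map_ext_in. intros k Hk.
    apply filter_In in Hk. destruct Hk as [Hk _]. apply in_seq in Hk.
    replace (k - s)%nat with (S (k - S s)) by lia. reflexivity.
  - apply map_ext_in. intros k Hk.
    apply filter_In in Hk. destruct Hk as [Hk _]. apply in_seq in Hk.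
    replace (k - s)%nat with (S (k - S s)) by lia. reflexivity.
Qed.

Lemma remove_two_eq i j l :
  remove_two i j l = map (fun k => nth k l 0) (filter (fun k => negb (Nat.eqb k i || Nat.eqb k j)) (seq 0 (length l))).
Proof.
  unfold remove_two.
  rewrite (map_fst_filter_combine (fun k => negb (Nat.eqb k i || Nat.eqb k j))).
  apply map_ext. intros. rewrite Nat.sub_0_r. reflexivity.
Qed.

Lemma map_nth_seq_self (l : list R) : map (fun k => nth k l 0) (seq 0 (length l)) = l.
Proof.
  apply nth_ext with (d := 0) (d' := 0).
  - rewrite length_map, length_seq. reflexivity.
  - intros k Hk. rewrite length_map, length_seq in Hk.
    rewrite <- (nth_nth_nth_map l 0 (seq 0 (length l)) (dn := 0%nat)) by (rewrite length_seq; auto).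
    rewrite seq_nth by auto. reflexivity.
Qed.

Lemma perm_two i j (l : list R) : i <> j -> (i < length l)%nat -> (j < length l)%nat ->
  Permutation l (nth i l 0 :: nth j l 0 :: remove_two i j l).
Proof.
  intros Hij Hi Hj. rewrite remove_two_eq.
  rewrite <- (map_nth_seq_self l) at 1.
  change (nth i l 0 :: nth j l 0 :: map (fun k => nth k l 0) (filter (fun k => negb (Nat.eqb k i || Nat.eqb k j)) (seq 0 (length l))))
    with (map (fun k => nth k l 0) (i :: j :: filter (fun k => negb (Nat.eqb k i || Nat.eqb k j)) (seq 0 (length l)))).
  apply Permutation_map. apply NoDup_Permutation.
  - apply seq_NoDup.
  - constructor.
    + intros [E|E]; [lia|]. apply filter_In in E. destruct E as [_ E].
      rewrite Nat.eqb_refl in E. simpl in E. discriminate.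
    + constructor.
      * intros E. apply filter_In in E. destruct E as [_ E].
        rewrite Nat.eqb_refl, Bool.orb_true_r in E. simpl in E. discriminate.
      * apply NoDup_filter, seq_NoDup.
  - intros x. split.
    + intros Hx. apply in_seq in Hx. destruct (Nat.eq_dec x i); [left; auto|].
      destruct (Nat.eq_dec x j); [right; left; auto|]. right; right.
      apply filter_In. split; [apply in_seq; lia|].
      apply Nat.eqb_neq in n. apply Nat.eqb_neq in n0. rewrite n, n0. reflexivity.
    + intros [E|[E|E]]; try (subst; apply in_seq; lia).
      apply filter_In in E. tauto.
Qed.

Lemma in_remove_two i j (l : list R) x : In x (remove_two i j l) ->
  exists k, (k < length l)%nat /\ k <> i /\ k <> j /\ x = nth k l 0.
Proof.
  rewrite remove_two_eq. intros Hx. apply in_map_iff in Hx. destruct Hx as [k [Ek Hk]].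
  apply filter_In in Hk. destruct Hk as [Hk Hb]. apply in_seq in Hk.
  exists k. destruct (Nat.eqb k i) eqn:E1; [discriminate|]. destruct (Nat.eqb k j) eqn:E2; [discriminate|].
  apply Nat.eqb_neq in E1. apply Nat.eqb_neq in E2. repeat split; auto; lia.
Qed.

Lemma step_abs p p' : huffman_step p p' ->
  exists a b r, Permutation p (a :: b :: r) /\ Permutation p' (a + b :: r) /\
    (forall x, In x r -> a <= x /\ b <= x).
Proof.
  intros [i [j [Hij [Hi [Hj [Hmin [Hp' _]]]]]]].
  exists (nth i p 0), (nth j p 0), (remove_two i j p). split; [apply perm_two; auto|]. split; auto.
  intros x Hx. apply in_remove_two in Hx. destruct Hx as [k [Hk [Hki [Hkj E]]]]. subst. auto.
Qed.
Definition Agg (p q : list R) : Prop :=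
  exists f : nat -> nat, (forall j, (j < length p)%nat -> (f j < length q)%nat) /\
    forall i, (i < length q)%nat -> nth i q 0 = sumR (length p) (fun j => if Nat.eqb (f j) i then nth j p 0 else 0).

Lemma sumR_ind' k a (g : nat -> R) : (a < k)%nat -> sumR k (fun l => if Nat.eqb l a then g l else 0) = g a.
Proof.
  intros H. rewrite <- (sumR_ind k a (g a) H). apply sumR_ext. intros l _.
  destruct (Nat.eqb l a) eqn:E; auto. apply Nat.eqb_eq in E. subst. auto.
Qed.

Lemma Agg_trans p p' q : Agg p p' -> Agg p' q -> Agg p q.
Proof.
  intros [f1 [H1 E1]] [f2 [H2 E2]]. exists (fun j => f2 (f1 j)). split; [auto|].
  intros i Hi. rewrite E2 by auto.
  transitivity (sumR (length p') (fun l => sumR (length p) (fun j => if Nat.eqb (f1 j) l then (if Nat.eqb (f2 l) i then nth j p 0 else 0) else 0))).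
  - apply sumR_ext. intros l Hl. destruct (Nat.eqb (f2 l) i).
    + rewrite E1 by auto. reflexivity.
    + transitivity (sumR (length p) (fun _ => 0)); [symmetry; apply sumR_zero|].
      apply sumR_ext; intros j _; destruct (Nat.eqb (f1 j) l); auto.
  - rewrite sumR_swap. apply sumR_ext. intros j Hj.
    rewrite (sumR_ext _ _ (fun l => if Nat.eqb l (f1 j) then (if Nat.eqb (f2 l) i then nth j p 0 else 0) else 0)).
    + apply sumR_ind'. auto.
    + intros l _. rewrite Nat.eqb_sym. reflexivity.
Qed.

Lemma Agg_skip x l l' : Agg l l' -> Agg (x :: l) (x :: l').
Proof.
  intros [f [Hf E]]. exists (fun j => match j with 0 => 0 | S j => S (f j) end)%nat. split.
  - intros [|j] Hj; simpl in *; [lia|]. specialize (Hf j ltac:(lia)). lia.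
  - intros [|i] Hi; simpl length; rewrite sumR_shift; simpl.
    + rewrite sumR_zero. lra.
    + rewrite E by (simpl in Hi; lia). lra.
Qed.

Lemma Agg_id l : Agg l l.
Proof. induction l. - exists (fun j => j). split; intros; simpl in *; lia. - apply Agg_skip; auto. Qed.

Lemma Agg_swap x y l : Agg (y :: x :: l) (x :: y :: l).
Proof.
  exists (fun j => match j with 0 => 1 | 1 => 0 | j => j end)%nat. split.
  - intros [|[|j]] Hj; simpl in *; lia.
  - intros [|[|i]] Hi; simpl length; rewrite !sumR_shift; simpl.
    + rewrite sumR_zero. lra.
    + rewrite sumR_zero. lra.
    + try rewrite (sumR_ext _ _ (fun j => if Nat.eqb j i then nth j l 0 else 0)) by (intros; reflexivity).
      rewrite sumR_ind' by (simpl in Hi; lia). lra.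
Qed.

Lemma Agg_perm l l' : Permutation l l' -> Agg l l'.
Proof.
  induction 1.
  - apply Agg_id.
  - apply Agg_skip; auto.
  - apply Agg_swap.
  - eapply Agg_trans; eauto.
Qed.

Lemma Agg_merge a b r : Agg (a :: b :: r) (a + b :: r).
Proof.
  exists (fun j => match j with 0 => 0 | 1 => 0 | S j => j end)%nat. split.
  - intros [|[|j]] Hj; simpl in *; lia.
  - intros [|i] Hi; simpl length; rewrite !sumR_shift; simpl.
    + try rewrite (sumR_ext _ _ (fun _ => 0)) by (intros; reflexivity). rewrite sumR_zero. lra.
    + try rewrite (sumR_ext _ _ (fun j => if Nat.eqb j i then nth j r 0 else 0)) by (intros; reflexivity).
      rewrite sumR_ind' by (simpl in Hi; lia). lra.
Qed.

Definition nonneg (l : list R) := forall x, In x l -> 0 <= x.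

Lemma step_props p p' : huffman_step p p' -> nonneg p ->
  Agg p p' /\ nonneg p' /\ (length p' + 1 = length p)%nat /\
  exists a b r, Permutation p (a :: b :: r) /\ Permutation p' (a + b :: r) /\
    (forall x, In x r -> a <= x /\ b <= x) /\ 0 <= a /\ 0 <= b.
Proof.
  intros Hs Hn. destruct (step_abs _ _ Hs) as [a [b [r [P1 [P2 Hr]]]]].
  assert (0 <= a) by (apply Hn; apply (Permutation_in _ (Permutation_sym P1)); left; auto).
  assert (0 <= b) by (apply Hn; apply (Permutation_in _ (Permutation_sym P1)); right; left; auto).
  split; [|split; [|split]].
  - eapply Agg_trans; [apply Agg_perm; exact P1|]. eapply Agg_trans; [apply Agg_merge|].
    apply Agg_perm, Permutation_sym; auto.
  - intros x Hx. apply (Permutation_in _ P2) in Hx. destruct Hx as [E|Hx]; [subst; lra|].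
    apply Hn. apply (Permutation_in _ (Permutation_sym P1)). right; right; auto.
  - apply Permutation_length in P1. apply Permutation_length in P2. simpl in *. lia.
  - exists a, b, r. auto.
Qed.

Lemma steps_agg k p q : huffman_steps k p q -> nonneg p ->
  Agg p q /\ nonneg q /\ (length q + k = length p)%nat.
Proof.
  induction 1; intros Hn.
  - split; [apply Agg_id|]. split; auto; lia.
  - destruct (step_props _ _ H Hn) as [A [N [L _]]]. destruct (IHhuffman_steps N) as [A2 [N2 L2]].
    split; [eapply Agg_trans; eauto|]. split; auto. lia.
Qed.

Lemma steps_lower k p q c : huffman_steps k p q -> nonneg p -> (forall x, In x p -> c <= x) ->
  forall y, In y q -> c <= y.
Proof.
  induction 1; intros Hn Hc; auto.
  destruct (step_props _ _ H Hn) as [_ [N [_ [a [b [r [P1 [P2 [Hr [Ha Hb]]]]]]]]]].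
  apply IHhuffman_steps; auto.
  intros x Hx. apply (Permutation_in _ P2) in Hx.
  assert (c <= a) by (apply Hc; apply (Permutation_in _ (Permutation_sym P1)); left; auto).
  destruct Hx as [E|Hx]; [subst; lra|].
  apply Hc. apply (Permutation_in _ (Permutation_sym P1)). right; right; auto.
Qed.

Definition gtb (T x : R) : bool := if Rlt_dec T x then true else false.

Lemma steps_big k p q : huffman_steps k p q -> nonneg p ->
  forall T, (exists y, In y q /\ 2 * y <= T) ->
  Permutation (filter (gtb T) q) (filter (gtb T) p).
Proof.
  induction 1; intros Hn T [y [Hy HT]]; auto.
  destruct (step_props _ _ H Hn) as [_ [N [_ [a [b [r [P1 [P2 [Hr [Ha Hb]]]]]]]]]].
  eapply perm_trans; [apply IHhuffman_steps; eauto|].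
  assert (Ly : forall c, (forall x, In x p' -> c <= x) -> c <= y).
  { intros c Hc. eapply steps_lower; eauto. }
  assert (a <= y).
  { apply Ly. intros x Hx. apply (Permutation_in _ P2) in Hx. destruct Hx as [E|Hx]; [subst; lra|]. apply Hr; auto. }
  assert (b <= y).
  { apply Ly. intros x Hx. apply (Permutation_in _ P2) in Hx. destruct Hx as [E|Hx]; [subst; lra|]. apply Hr; auto. }
  eapply perm_trans; [apply Permutation_filter'; exact P2|].
  eapply perm_trans; [|apply Permutation_filter'; apply Permutation_sym; exact P1].
  simpl. unfold gtb. destruct (Rlt_dec T (a + b)); [lra|]. destruct (Rlt_dec T a); [lra|].
  destruct (Rlt_dec T b); [lra|]. apply Permutation_refl.
Qed.
Lemma W_inf p q : (exists M, is_coupling p q M) ->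
  (exists B, forall M, is_coupling p q M -> B <= Hjoint (length q) (length p) M) ->
  is_inf (coupling_entropies p q) (W p q).
Proof.
  intros [M0 HM0] [B HB]. unfold W. apply epsilon_spec.
  set (E := fun x => coupling_entropies p q (- x)).
  assert (Hb : bound E).
  { exists (- B). intros x [M [HM Ex]]. specialize (HB M HM). lra. }
  assert (Hne : exists x, E x).
  { exists (- Hjoint (length q) (length p) M0). exists M0. split; auto. lra. }
  destruct (completeness E Hb Hne) as [l [Hub Hlub]].
  exists (- l). split.
  - intros h Hh. assert (E (- h)) by (unfold E; rewrite Ropp_involutive; auto).
    specialize (Hub _ H). lra.
  - intros b Hbb. assert (l <= - b).
    { apply Hlub. intros x Hx. specialize (Hbb _ Hx). lra. }
    lra.
Qed.

Lemma W_le p q M : is_inf (coupling_entropies p q) (W p q) -> is_coupling p q M ->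
  W p q <= Hjoint (length q) (length p) M.
Proof. intros [H1 _] HM. apply H1. exists M. split; auto. Qed.

Lemma W_ge p q B : is_inf (coupling_entropies p q) (W p q) ->
  (forall M, is_coupling p q M -> B <= Hjoint (length q) (length p) M) -> B <= W p q.
Proof. intros [_ H2] HB. apply H2. intros h [M [HM E]]. subst. auto. Qed.

Lemma prob_nth l i : is_prob l -> (i < length l)%nat -> 0 <= nth i l 0.
Proof. intros [HF _] Hi. rewrite Forall_forall in HF. apply HF. apply nth_In. auto. Qed.

Lemma prod_coupling p q : is_prob p -> is_prob q -> exists M, is_coupling p q M.
Proof.
  intros Hp Hq. exists (fun i j => nth i q 0 * nth j p 0). split; [|split].
  - intros. apply Rmult_le_pos; apply prob_nth; auto.
  - intros j Hj. rewrite (sumR_ext _ _ (fun i => nth j p 0 * nth i q 0)) by (intros; ring).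
    rewrite sumR_scal. destruct Hq as [_ Hq]. rewrite Hq. ring.
  - intros i Hi. rewrite sumR_scal. destruct Hp as [_ Hp]. rewrite Hp. ring.
Qed.

Lemma prob_lsum l : is_prob l -> lsum l = 1.
Proof. intros [_ H]. rewrite <- lsum_map_id, <- (sumR_nth (fun x => x)). auto. Qed.

Lemma prob_nonneg l : is_prob l -> nonneg l.
Proof. intros [HF _] x Hx. rewrite Forall_forall in HF. auto. Qed.

Lemma list_min (l : list R) : l <> [] -> exists mu, In mu l /\ forall y, In y l -> mu <= y.
Proof.
  induction l as [|a l IH]; intros Hl; [congruence|].
  destruct l as [|b l'].
  - exists a. split; [left; auto|]. intros y [E|[]]; subst; lra.
  - destruct IH as [mu [Hmu Hall]]; [discriminate|].
    destruct (Rle_dec a mu).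
    + exists a. split; [left; auto|]. intros y [E|Hy]; [subst; lra|]. specialize (Hall y Hy). lra.
    + exists mu. split; [right; auto|]. intros y [E|Hy]; [subst; lra|]. auto.
Qed.

Lemma filter_length_split (P : R -> bool) (l : list R) :
  (length (filter P l) + length (filter (fun x => negb (P x)) l) = length l)%nat.
Proof. induction l; simpl; auto. destruct (P a); simpl; lia. Qed.

Lemma lsum_filter (P : R -> bool) l :
  lsum l = lsum (filter P l) + lsum (filter (fun x => negb (P x)) l).
Proof.
  rewrite <- (lsum_map_id l), <- (lsum_map_id (filter P l)), <- (lsum_map_id (filter _ l)).
  apply lsum_filter_split.
Qed.

Lemma lsum_in_le l x : nonneg l -> In x l -> x <= lsum l.
Proof.
  induction l; intros Hn Hx; [destruct Hx|]. simpl. destruct Hx as [E|Hx].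
  - subst. assert (0 <= lsum l) by (apply lsum_nonneg; intros; apply Hn; right; auto). unfold lsum in *. lra.
  - assert (0 <= a) by (apply Hn; left; auto). assert (x <= lsum l) by (apply IHl; auto; intros y Hy; apply Hn; right; auto).
    unfold lsum in *. simpl. lra.
Qed.

Lemma lsum_upper l c : (forall x, In x l -> x <= c) -> lsum l <= INR (length l) * c.
Proof.
  induction l; intros H; [simpl; lra|]. cbn [length]. rewrite S_INR.
  assert (a <= c) by (apply H; left; auto). assert (lsum l <= INR (length l) * c) by (apply IHl; intros; apply H; right; auto).
  unfold lsum in *. simpl. lra.
Qed.
Lemma lower_main p qbar q M :
  is_prob p -> is_prob qbar -> is_prob q -> length q = length qbar -> (1 <= length qbar)%nat ->
  is_coupling p q M ->
  (forall T, (exists y, In y qbar /\ 2 * y <= T) -> Permutation (filter (gtb T) qbar) (filter (gtb T) p)) ->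
  H p - H qbar - alpha <= 2 * Hjoint (length q) (length p) M - H p - H q.
Proof.
  intros Hp Hqb Hq Hlen Hm HC Hbig.
  destruct (list_min qbar) as [mu [Hmu Hmin]]. { destruct qbar; simpl in Hm; [lia|discriminate]. }
  pose proof (prob_nonneg _ Hqb) as Nqb. pose proof (prob_nonneg _ Hp) as Np.
  assert (mu0 : 0 <= mu) by auto.
  set (T := 2 * mu).
  assert (PB := Hbig T ltac:(exists mu; split; auto; unfold T; lra)).
  set (Big := filter (gtb T) qbar). set (Small := filter (fun x => negb (gtb T x)) qbar).
  set (N := length Small). set (s := lsum Small). set (sig := s / INR N).
  assert (HmuS : In mu Small).
  { unfold Small. apply filter_In. split; auto. unfold gtb. destruct (Rlt_dec T mu); unfold T in *; [lra|auto]. }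
  assert (HN : (1 <= N)%nat) by (unfold N; destruct Small; [destruct HmuS|simpl; lia]).
  assert (HNr : 1 <= INR N) by (apply (le_INR 1); auto).
  assert (Hsmall : forall v, In v Small -> mu <= v <= 2 * mu).
  { intros v Hv. unfold Small in Hv. apply filter_In in Hv. destruct Hv as [Hv Hg]. split; auto.
    unfold gtb in Hg. destruct (Rlt_dec T v); simpl in Hg; [discriminate|]. unfold T in *; lra. }
  assert (Snn : nonneg Small) by (intros v Hv; specialize (Hsmall v Hv); lra).
  assert (Hs0 : 0 <= s) by (apply lsum_nonneg; auto).
  assert (Hsum1 : lsum Big + s = 1) by (unfold s, Big, Small; rewrite <- lsum_filter; apply prob_lsum; auto).
  assert (HBnn : 0 <= lsum Big) by (apply lsum_nonneg; intros x Hx; apply Nqb; unfold Big in Hx; apply filter_In in Hx; tauto).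
  assert (Hsig0 : 0 <= sig) by (unfold sig; apply Rmult_le_pos; [lra|left; apply Rinv_0_lt_compat; lra]).
  assert (HsigT : sig <= T).
  { unfold sig. pose proof (lsum_upper Small T ltac:(intros v Hv; specialize (Hsmall v Hv); unfold T; lra)) as X.
    fold s N in X. apply (Rmult_le_reg_r (INR N)); [lra|]. unfold Rdiv. rewrite Rmult_assoc, Rinv_l by lra. lra. }
  assert (HsigN : sig * INR N = s) by (unfold sig; field; lra).
  assert (Hk : (length (filter (gtb T) p) + N = length q)%nat).
  { rewrite <- (Permutation_length PB). unfold N, Small. rewrite Hlen. apply filter_length_split. }
  set (k := length (filter (gtb T) p)) in *.
  set (n := length p). set (m := length q).
  set (z := fun j => if gtb T (nth j p 0) then nth j p 0 else sig).
  set (w := fun i => sig + sumR n (fun l => if gtb T (nth l p 0) then M i l / nth l p 0 * (nth l p 0 - sig) else 0)).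
  assert (gtbP : forall x, gtb T x = true -> T < x).
  { intros x. unfold gtb. destruct (Rlt_dec T x); auto; discriminate. }
  assert (gtbN : forall x, gtb T x = false -> x <= T).
  { intros x. unfold gtb. destruct (Rlt_dec T x); [discriminate|lra]. }
  assert (Hterm : forall i l, (i < m)%nat -> (l < n)%nat ->
      0 <= (if gtb T (nth l p 0) then M i l / nth l p 0 * (nth l p 0 - sig) else 0)).
  { intros i l Hi Hl. destruct (gtb T (nth l p 0)) eqn:G; [|lra]. apply gtbP in G.
    apply Rmult_le_pos; [|unfold T in *; lra]. apply Rmult_le_pos; [apply (coup_nonneg p q M HC); auto|].
    left; apply Rinv_0_lt_compat. unfold T in *; lra. }
  assert (Hw0 : forall i, (i < m)%nat -> 0 <= w i).
  { intros i Hi. unfold w. assert (0 <= sumR n (fun l => if gtb T (nth l p 0) then M i l / nth l p 0 * (nth l p 0 - sig) else 0)).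
    apply sumR_nonneg. intros; apply Hterm; auto. lra. }
  assert (Hz : forall j, (j < n)%nat -> 0 < nth j p 0 -> 0 < z j).
  { intros j Hj Hpj. unfold z. destruct (gtb T (nth j p 0)) eqn:G; auto. apply gtbN in G.
    assert (0 < mu) by (unfold T in *; lra).
    assert (mu <= s) by (apply lsum_in_le; auto).
    unfold sig. apply Rdiv_lt_0_compat; lra. }
  assert (Hmz : forall i j, (i < m)%nat -> (j < n)%nat -> M i j * z j <= nth j p 0 * w i).
  { intros i j Hi Hj. pose proof (coup_nonneg p q M HC i j Hi Hj). pose proof (coup_le_p p q M HC i j Hi Hj).
    unfold z. destruct (gtb T (nth j p 0)) eqn:G.
    - pose proof (gtbP _ G) as HG.
      assert (M i j / nth j p 0 * (nth j p 0 - sig) <= sumR n (fun l => if gtb T (nth l p 0) then M i l / nth l p 0 * (nth l p 0 - sig) else 0)).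
      { pose proof (sumR_ge_term n (fun l => if gtb T (nth l p 0) then M i l / nth l p 0 * (nth l p 0 - sig) else 0) j
          ltac:(intros; apply Hterm; auto) Hj) as X. cbv beta in X. rewrite G in X. auto. }
      assert (M i j <= w i).
      { unfold w. assert (M i j / nth j p 0 * (nth j p 0 - sig) = M i j - sig * (M i j / nth j p 0))
          by (field; unfold T in *; lra).
        assert (M i j / nth j p 0 <= 1).
        { apply (Rmult_le_reg_r (nth j p 0)); [unfold T in *; lra|]. unfold Rdiv. rewrite Rmult_assoc, Rinv_l by (unfold T in *; lra). lra. }
        assert (sig * (M i j / nth j p 0) <= sig) by (rewrite <- (Rmult_1_r sig) at 2; apply Rmult_le_compat_l; lra).
        lra. }
      rewrite Rmult_comm. apply Rmult_le_compat_l; unfold T in *; lra.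
    - assert (sig <= w i). { unfold w. assert (0 <= sumR n (fun l => if gtb T (nth l p 0) then M i l / nth l p 0 * (nth l p 0 - sig) else 0)).
        apply sumR_nonneg. intros; apply Hterm; auto. lra. }
      apply Rmult_le_compat; lra. }
  assert (Hsw : sumR m w <= 1).
  { unfold w. rewrite sumR_plus.
    rewrite (sumR_ext m (fun _ => sig) (fun _ => sig * 1)) by (intros; ring). rewrite sumR_scal.
    assert (E1 : sumR m (fun _ => 1) = INR m). { clear. induction m; [reflexivity|]. rewrite sumR_S, IHm, S_INR. ring. }
    rewrite E1. rewrite sumR_swap.
    rewrite (sumR_ext n _ (fun l => if gtb T (nth l p 0) then nth l p 0 - sig else 0)).
    2: { intros l Hl. destruct (gtb T (nth l p 0)) eqn:G.
         - pose proof (gtbP _ G) as HG.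
           rewrite (sumR_ext m _ (fun i => ((nth l p 0 - sig) / nth l p 0) * M i l)) by (intros; unfold Rdiv; ring).
           rewrite sumR_scal. destruct HC as [_ [HC2 _]]. rewrite HC2 by auto. field. unfold T in *; lra.
         - apply sumR_zero. }
    unfold n. rewrite (sumR_nth (fun x => if gtb T x then x - sig else 0) p).
    rewrite lsum_map_if.
    rewrite (map_ext (fun x => x - sig) (fun x => x + (-sig) * 1)) by (intros; ring).
    rewrite lsum_map_plus, lsum_map_id, lsum_map_scal, lsum_const.
    rewrite (lsum_perm _ _ (Permutation_sym PB)). fold Big. fold k.
    unfold m. rewrite <- Hk. rewrite plus_INR. nra. }
  pose proof (coup_lb1 p q M HC) as L1.
  pose proof (coup_lb2 p q M HC z w Hq Hz Hw0 Hsw Hmz) as L2. fold n m in L1, L2.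
  assert (HZ : sumR n (fun j => - (nth j p 0 * log2 (z j))) <= H qbar + alpha).
  { set (g := fun x => if gtb T x then entr x else sig * 0 + - (x * log2 sig)).
    rewrite (sumR_ext n _ (fun j => g (nth j p 0))).
    2: { intros j Hj. unfold g, z. destruct (gtb T (nth j p 0)) eqn:G; [|ring].
         rewrite entr_nonneg_form; auto. apply prob_nth; auto. }
    unfold n. rewrite sumR_nth. rewrite (lsum_filter_split (gtb T)).
    rewrite (map_ext_in g entr (filter (gtb T) p)).
    2: { intros x Hx. apply filter_In in Hx. unfold g. destruct Hx as [_ Hx]. rewrite Hx. auto. }
    rewrite (map_ext_in g (fun x => (- log2 sig) * x) (filter (fun x => negb (gtb T x)) p)).
    2: { intros x Hx. apply filter_In in Hx. unfold g. destruct Hx as [_ Hx]. destruct (gtb T x); [discriminate|ring]. }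
    rewrite lsum_map_scal, lsum_map_id.
    assert (Eps : lsum (filter (fun x => negb (gtb T x)) p) = s).
    { pose proof (lsum_filter (gtb T) p) as X. rewrite (prob_lsum p Hp) in X.
      rewrite (lsum_perm _ _ (Permutation_sym PB)) in X. fold Big in X. lra. }
    rewrite Eps.
    assert (Ent : lsum (map entr (filter (gtb T) p)) = lsum (map entr Big)).
    { apply lsum_perm. apply Permutation_map. apply Permutation_sym. auto. }
    rewrite Ent.
    assert (Hq' : H qbar = lsum (map entr Big) + lsum (map entr Small)).
    { unfold H. rewrite sumR_nth. apply lsum_filter_split. }
    rewrite Hq'.
    pose proof (ratio_lemma Small mu mu0 Hsmall HN ltac:(fold s; lra)) as X. fold s N sig in X. lra. }
  lra.
Qed.
Lemma exp_up_base y u : 0 < y -> y < 1 -> 1 <= u * (1 - y) -> exp y <= u.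
Proof.
  intros H1 H2 H3. pose proof (exp_ineq1_le (- y)). pose proof (exp_pos y).
  assert (exp y * exp (- y) = 1) by (rewrite <- exp_plus; replace (y + - y) with 0 by ring; apply exp_0).
  assert (exp y * (1 - y) <= 1) by nra. nra.
Qed.

Lemma exp_up_step y u x v : x = 2 * y -> exp y <= u -> u * u <= v -> exp x <= v.
Proof.
  intros E H1 H2. subst. replace (2 * y) with (y + y) by ring. rewrite exp_plus.
  pose proof (exp_pos y). nra.
Qed.

Lemma exp_lo_base y u : u <= 1 + y -> u <= exp y.
Proof. intros H. pose proof (exp_ineq1_le y). lra. Qed.

Lemma exp_lo_step y u x v : x = 2 * y -> 0 <= u -> u <= exp y -> v <= u * u -> v <= exp x.
Proof.
  intros E H0 H1 H2. subst. replace (2 * y) with (y + y) by ring. rewrite exp_plus. nra.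
Qed.
Lemma exp_a_up : exp (0.693147) <= 2.
Proof.
  assert (h0 : exp (0.693147 / 4194304) <= 1.000000165259150160) by (apply exp_up_base; lra).
  assert (h1 : exp (0.693147 / 2097152) <= 1.000000330518327631) by (apply (exp_up_step (0.693147 / 4194304) 1.000000165259150160); [lra|exact h0|lra]).
  assert (h2 : exp (0.693147 / 1048576) <= 1.000000661036764505) by (apply (exp_up_step (0.693147 / 2097152) 1.000000330518327631); [lra|exact h1|lra]).
  assert (h3 : exp (0.693147 / 524288) <= 1.000001322073965980) by (apply (exp_up_step (0.693147 / 1048576) 1.000000661036764505); [lra|exact h2|lra]).
  assert (h4 : exp (0.693147 / 262144) <= 1.000002644149679840) by (apply (exp_up_step (0.693147 / 524288) 1.000001322073965980); [lra|exact h3|lra]).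
  assert (h5 : exp (0.693147 / 131072) <= 1.000005288306351208) by (apply (exp_up_step (0.693147 / 262144) 1.000002644149679840); [lra|exact h4|lra]).
  assert (h6 : exp (0.693147 / 65536) <= 1.000010576640668601) by (apply (exp_up_step (0.693147 / 131072) 1.000005288306351208); [lra|exact h5|lra]).
  assert (h7 : exp (0.693147 / 32768) <= 1.000021153393202530) by (apply (exp_up_step (0.693147 / 65536) 1.000010576640668601); [lra|exact h6|lra]).
  assert (h8 : exp (0.693147 / 16384) <= 1.000042307233871104) by (apply (exp_up_step (0.693147 / 32768) 1.000021153393202530); [lra|exact h7|lra]).
  assert (h9 : exp (0.693147 / 8192) <= 1.000084616257644246) by (apply (exp_up_step (0.693147 / 16384) 1.000042307233871104); [lra|exact h8|lra]).
  assert (h10 : exp (0.693147 / 4096) <= 1.000169239675199550) by (apply (exp_up_step (0.693147 / 8192) 1.000084616257644246); [lra|exact h9|lra]).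
  assert (h11 : exp (0.693147 / 2048) <= 1.000338507992466762) by (apply (exp_up_step (0.693147 / 4096) 1.000169239675199550); [lra|exact h10|lra]).
  assert (h12 : exp (0.693147 / 1024) <= 1.000677130572594488) by (apply (exp_up_step (0.693147 / 2048) 1.000338507992466762); [lra|exact h11|lra]).
  assert (h13 : exp (0.693147 / 512) <= 1.001354719651001319) by (apply (exp_up_step (0.693147 / 1024) 1.000677130572594488); [lra|exact h12|lra]).
  assert (h14 : exp (0.693147 / 256) <= 1.002711274567335448) by (apply (exp_up_step (0.693147 / 512) 1.001354719651001319); [lra|exact h13|lra]).
  assert (h15 : exp (0.693147 / 128) <= 1.005429900144450377) by (apply (exp_up_step (0.693147 / 256) 1.002711274567335448); [lra|exact h14|lra]).
  assert (h16 : exp (0.693147 / 64) <= 1.010889284104479457) by (apply (exp_up_step (0.693147 / 128) 1.005429900144450377); [lra|exact h15|lra]).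
  assert (h17 : exp (0.693147 / 32) <= 1.021897144717266983) by (apply (exp_up_step (0.693147 / 64) 1.010889284104479457); [lra|exact h16|lra]).
  assert (h18 : exp (0.693147 / 16) <= 1.044273774381302900) by (apply (exp_up_step (0.693147 / 32) 1.021897144717266983); [lra|exact h17|lra]).
  assert (h19 : exp (0.693147 / 8) <= 1.090507715860572313) by (apply (exp_up_step (0.693147 / 16) 1.044273774381302900); [lra|exact h18|lra]).
  assert (h20 : exp (0.693147 / 4) <= 1.189207078351442720) by (apply (exp_up_step (0.693147 / 8) 1.090507715860572313); [lra|exact h19|lra]).
  assert (h21 : exp (0.693147 / 2) <= 1.414213475201174425) by (apply (exp_up_step (0.693147 / 4) 1.189207078351442720); [lra|exact h20|lra]).
  assert (h22 : exp (0.693147) <= 1.999999753440582791) by (apply (exp_up_step (0.693147 / 2) 1.414213475201174425); [lra|exact h21|lra]).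
  lra.
Qed.

Lemma exp_b_lo : exp (0.693148) >= 2.
Proof.
  assert (h0 : 1.000000165259361267 <= exp (0.693148 / 4194304)) by (apply exp_lo_base; lra).
  assert (h1 : 1.000000330518749844 <= exp (0.693148 / 2097152)) by (apply (exp_lo_step (0.693148 / 4194304) 1.000000165259361267); [lra|lra|exact h0|lra]).
  assert (h2 : 1.000000661037608930 <= exp (0.693148 / 1048576)) by (apply (exp_lo_step (0.693148 / 2097152) 1.000000330518749844); [lra|lra|exact h1|lra]).
  assert (h3 : 1.000001322075654830 <= exp (0.693148 / 524288)) by (apply (exp_lo_step (0.693148 / 1048576) 1.000000661037608930); [lra|lra|exact h2|lra]).
  assert (h4 : 1.000002644153057544 <= exp (0.693148 / 262144)) by (apply (exp_lo_step (0.693148 / 524288) 1.000001322075654830); [lra|lra|exact h3|lra]).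
  assert (h5 : 1.000005288313106633 <= exp (0.693148 / 131072)) by (apply (exp_lo_step (0.693148 / 262144) 1.000002644153057544); [lra|lra|exact h4|lra]).
  assert (h6 : 1.000010576654179521 <= exp (0.693148 / 65536)) by (apply (exp_lo_step (0.693148 / 131072) 1.000005288313106633); [lra|lra|exact h5|lra]).
  assert (h7 : 1.000021153420224655 <= exp (0.693148 / 32768)) by (apply (exp_lo_step (0.693148 / 65536) 1.000010576654179521); [lra|lra|exact h6|lra]).
  assert (h8 : 1.000042307287916497 <= exp (0.693148 / 16384)) by (apply (exp_lo_step (0.693148 / 32768) 1.000021153420224655); [lra|lra|exact h7|lra]).
  assert (h9 : 1.000084616365739604 <= exp (0.693148 / 8192)) by (apply (exp_lo_step (0.693148 / 16384) 1.000042307287916497); [lra|lra|exact h8|lra]).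
  assert (h10 : 1.000169239891408558 <= exp (0.693148 / 4096)) by (apply (exp_lo_step (0.693148 / 8192) 1.000084616365739604); [lra|lra|exact h9|lra]).
  assert (h11 : 1.000338508424957959 <= exp (0.693148 / 2048)) by (apply (exp_lo_step (0.693148 / 4096) 1.000169239891408558); [lra|lra|exact h10|lra]).
  assert (h12 : 1.000677131437869685 <= exp (0.693148 / 1024)) by (apply (exp_lo_step (0.693148 / 2048) 1.000338508424957959); [lra|lra|exact h11|lra]).
  assert (h13 : 1.001354721382723521 <= exp (0.693148 / 512)) by (apply (exp_lo_step (0.693148 / 1024) 1.000677131437869685); [lra|lra|exact h12|lra]).
  assert (h14 : 1.002711278035471850 <= exp (0.693148 / 256)) by (apply (exp_lo_step (0.693148 / 512) 1.001354721382723521); [lra|lra|exact h13|lra]).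
  assert (h15 : 1.005429907099529332 <= exp (0.693148 / 128)) by (apply (exp_lo_step (0.693148 / 256) 1.002711278035471850); [lra|lra|exact h14|lra]).
  assert (h16 : 1.010889298090168183 <= exp (0.693148 / 64)) by (apply (exp_lo_step (0.693148 / 128) 1.005429907099529332); [lra|lra|exact h15|lra]).
  assert (h17 : 1.021897172993232906 <= exp (0.693148 / 32)) by (apply (exp_lo_step (0.693148 / 64) 1.010889298090168183); [lra|lra|exact h16|lra]).
  assert (h18 : 1.044273832171561380 <= exp (0.693148 / 16)) by (apply (exp_lo_step (0.693148 / 32) 1.021897172993232906); [lra|lra|exact h17|lra]).
  assert (h19 : 1.090507836558278343 <= exp (0.693148 / 8)) by (apply (exp_lo_step (0.693148 / 16) 1.044273832171561380); [lra|lra|exact h18|lra]).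
  assert (h20 : 1.189207341595016711 <= exp (0.693148 / 4)) by (apply (exp_lo_step (0.693148 / 8) 1.090507836558278343); [lra|lra|exact h19|lra]).
  assert (h21 : 1.414214101303486762 <= exp (0.693148 / 2)) by (apply (exp_lo_step (0.693148 / 4) 1.189207341595016711); [lra|lra|exact h20|lra]).
  assert (h22 : 2.000001524325628717 <= exp (0.693148)) by (apply (exp_lo_step (0.693148 / 2) 1.414214101303486762); [lra|lra|exact h21|lra]).
  lra.
Qed.

Lemma exp_beta_lo : exp (0.366516) >= 1 / 0.693147.
Proof.
  assert (h0 : 1.000000087384223937 <= exp (0.366516 / 4194304)) by (apply exp_lo_base; lra).
  assert (h1 : 1.000000174768455510 <= exp (0.366516 / 2097152)) by (apply (exp_lo_step (0.366516 / 4194304) 1.000000087384223937); [lra|lra|exact h0|lra]).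
  assert (h2 : 1.000000349536941564 <= exp (0.366516 / 1048576)) by (apply (exp_lo_step (0.366516 / 2097152) 1.000000174768455510); [lra|lra|exact h1|lra]).
  assert (h3 : 1.000000699074005304 <= exp (0.366516 / 524288)) by (apply (exp_lo_step (0.366516 / 1048576) 1.000000349536941564); [lra|lra|exact h2|lra]).
  assert (h4 : 1.000001398148499312 <= exp (0.366516 / 262144)) by (apply (exp_lo_step (0.366516 / 524288) 1.000000699074005304); [lra|lra|exact h3|lra]).
  assert (h5 : 1.000002796298953443 <= exp (0.366516 / 131072)) by (apply (exp_lo_step (0.366516 / 262144) 1.000001398148499312); [lra|lra|exact h4|lra]).
  assert (h6 : 1.000005592605726173 <= exp (0.366516 / 65536)) by (apply (exp_lo_step (0.366516 / 131072) 1.000002796298953443); [lra|lra|exact h5|lra]).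
  assert (h7 : 1.000011185242729584 <= exp (0.366516 / 32768)) by (apply (exp_lo_step (0.366516 / 65536) 1.000005592605726173); [lra|lra|exact h6|lra]).
  assert (h8 : 1.000022370610568822 <= exp (0.366516 / 16384)) by (apply (exp_lo_step (0.366516 / 32768) 1.000011185242729584); [lra|lra|exact h7|lra]).
  assert (h9 : 1.000044741721581861 <= exp (0.366516 / 8192)) by (apply (exp_lo_step (0.366516 / 16384) 1.000022370610568822); [lra|lra|exact h8|lra]).
  assert (h10 : 1.000089485444985372 <= exp (0.366516 / 4096)) by (apply (exp_lo_step (0.366516 / 8192) 1.000044741721581861); [lra|lra|exact h9|lra]).
  assert (h11 : 1.000178978897615608 <= exp (0.366516 / 2048)) by (apply (exp_lo_step (0.366516 / 4096) 1.000089485444985372); [lra|lra|exact h10|lra]).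
  assert (h12 : 1.000357989828677007 <= exp (0.366516 / 1024)) by (apply (exp_lo_step (0.366516 / 2048) 1.000178978897615608); [lra|lra|exact h11|lra]).
  assert (h13 : 1.000716107814071450 <= exp (0.366516 / 512)) by (apply (exp_lo_step (0.366516 / 1024) 1.000357989828677007); [lra|lra|exact h12|lra]).
  assert (h14 : 1.001432728438544274 <= exp (0.366516 / 256)) by (apply (exp_lo_step (0.366516 / 512) 1.000716107814071450); [lra|lra|exact h13|lra]).
  assert (h15 : 1.002867509587867161 <= exp (0.366516 / 128)) by (apply (exp_lo_step (0.366516 / 256) 1.001432728438544274); [lra|lra|exact h14|lra]).
  assert (h16 : 1.005743241786970832 <= exp (0.366516 / 64)) by (apply (exp_lo_step (0.366516 / 128) 1.002867509587867161); [lra|lra|exact h15|lra]).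
  assert (h17 : 1.011519468400165271 <= exp (0.366516 / 32)) by (apply (exp_lo_step (0.366516 / 64) 1.005743241786970832); [lra|lra|exact h16|lra]).
  assert (h18 : 1.023171634952552948 <= exp (0.366516 / 16)) by (apply (exp_lo_step (0.366516 / 32) 1.011519468400165271); [lra|lra|exact h17|lra]).
  assert (h19 : 1.046880194571480269 <= exp (0.366516 / 8)) by (apply (exp_lo_step (0.366516 / 16) 1.023171634952552948); [lra|lra|exact h18|lra]).
  assert (h20 : 1.095958141786020386 <= exp (0.366516 / 4)) by (apply (exp_lo_step (0.366516 / 8) 1.046880194571480269); [lra|lra|exact h19|lra]).
  assert (h21 : 1.201124248547066763 <= exp (0.366516 / 2)) by (apply (exp_lo_step (0.366516 / 4) 1.095958141786020386); [lra|lra|exact h20|lra]).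
  assert (h22 : 1.442699460447755812 <= exp (0.366516)) by (apply (exp_lo_step (0.366516 / 2) 1.201124248547066763); [lra|lra|exact h21|lra]).
  lra.
Qed.

Lemma alpha_bound : alpha < 0.08608.
Proof.
  rewrite alpha_eq. unfold cst. pose proof ln2_pos.
  assert (La : 0.693147 <= ln 2).
  { rewrite <- (ln_exp 0.693147). apply ln_le_mono; [apply exp_pos|apply exp_a_up]. }
  assert (Lb : ln 2 <= 0.693148).
  { rewrite <- (ln_exp 0.693148). apply ln_le_mono; [lra|apply Rge_le, exp_b_lo]. }
  assert (Lc : - 0.366516 <= ln (ln 2)).
  { assert (- 0.366516 <= ln 0.693147).
    { rewrite <- (ln_exp (- 0.366516)). apply ln_le_mono; [apply exp_pos|].
      pose proof (Rge_le _ _ exp_beta_lo). pose proof (exp_pos 0.366516).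
      assert (exp 0.366516 * exp (- 0.366516) = 1) by (rewrite <- exp_plus; replace (0.366516 + - 0.366516) with 0 by lra; apply exp_0).
      pose proof (exp_pos (- 0.366516)).
      assert (1 / 0.693147 * exp (-0.366516) <= 1) by nra. lra. }
    assert (ln 0.693147 <= ln (ln 2)) by (apply ln_le_mono; lra). lra. }
  apply (Rmult_lt_reg_r (ln 2)); auto. unfold Rdiv. rewrite Rmult_assoc, Rinv_l by lra. lra.
Qed.

Theorem mainTheorem14 (n m : nat) (p qbar : list R) :
  (2 <= m)%nat -> (m < n)%nat ->
  length p = n -> is_prob p -> Sorted Rge p ->
  huffman_steps (n - m) p qbar ->
  (forall q : list R, length q = m -> is_prob q ->
     D p qbar <= D p q + alpha) /\ alpha < 0.08608.
Proof.
  intros Hm Hmn Hlp Hp Hsort Hs. split; [|apply alpha_bound].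
  intros q Hlq Hq.
  pose proof (prob_nonneg _ Hp) as Np.
  destruct (steps_agg _ _ _ Hs Np) as [[f [Hf Ef]] [Nq Lq]].
  assert (Lqb : length qbar = m) by lia.
  assert (Hqb : is_prob qbar).
  { split; [apply Forall_forall; auto|].
    rewrite (sumR_ext _ _ _ Ef). rewrite sumR_swap. destruct Hp as [_ Hp1]. rewrite <- Hp1.
    apply sumR_ext. intros j Hj.
    rewrite (sumR_ext _ _ (fun i => if Nat.eqb i (f j) then nth j p 0 else 0)) by (intros; rewrite Nat.eqb_sym; auto).
    apply sumR_ind. auto. }
  set (Mb := fun i j => if Nat.eqb (f j) i then nth j p 0 else 0).
  assert (HCb : is_coupling p qbar Mb).
  { split; [|split].
    - intros i j Hi Hj. unfold Mb. destruct (Nat.eqb (f j) i); [apply prob_nth; auto|lra].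
    - intros j Hj. unfold Mb.
      rewrite (sumR_ext _ _ (fun i => if Nat.eqb i (f j) then nth j p 0 else 0)) by (intros; rewrite Nat.eqb_sym; auto).
      apply sumR_ind. auto.
    - intros i Hi. unfold Mb. rewrite Ef by auto. reflexivity. }
  assert (HJb : Hjoint (length qbar) (length p) Mb = H p).
  { unfold Hjoint, H. rewrite sumR_swap. apply sumR_ext. intros j Hj. unfold Mb.
    rewrite (sumR_ext _ _ (fun i => if Nat.eqb i (f j) then entr (nth j p 0) else 0)).
    - apply sumR_ind. auto.
    - intros i Hi. rewrite (Nat.eqb_sym i (f j)). destruct (Nat.eqb (f j) i); [reflexivity|apply entr_0]. }
  assert (Wb : W p qbar <= H p).
  { rewrite <- HJb. apply W_le; auto. apply W_inf; [exists Mb; auto|].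
    exists (H p). intros M HM. apply coup_lb1; auto. }
  assert (Hbig : forall T, (exists y, In y qbar /\ 2 * y <= T) -> Permutation (filter (gtb T) qbar) (filter (gtb T) p)).
  { intros T HT. eapply steps_big; eauto. }
  assert (Wq : (H p - H qbar - alpha + H p + H q) / 2 <= W p q).
  { apply W_ge.
    - apply W_inf; [apply prod_coupling; auto|]. exists (H p). intros M HM. apply coup_lb1; auto.
    - intros M HM. pose proof (lower_main p qbar q M Hp Hqb Hq ltac:(lia) ltac:(lia) HM Hbig). lra. }
  unfold D. lra.
Qed.
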